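(* Let $u$ be a nondecreasing packed word and let $v,v'$ be packed words with $\mathrm{WC}(v')=\mathrm{WC}(v)$. Then $\zeta(\mathbf M_u\star_q\mathbf M_v)=\zeta(\mathbf M_u\star_q\mathbf M_{v'})$.
   Context: Over $\mathbb K(q)$ ($\mathrm{char}\,\mathbb K=0$): packed words are words with letter set $\{1,\dots,m\}$; $\mathrm{pack}$ replaces the $t$-th smallest letter by $t$. For a packed word $w$ of length $N$: $\mathrm{WC}(w)$ is the composition of $N$ whose descent set (set of partial sums other than $N$) is the set of positions $p<N$ with $w_p$ not occurring in $w_{p+1}\cdots w_N$; $\mathrm{sinv}(w)=\#\{i<j:w_i>w_j,\ w_j\text{ not occurring in }w_{j+1}\cdots w_N\}$. $\mathbf{WQSym}$ has basis $\mathbf M_u$ with $\mathbf M_{u'}\mathbf M_{u''}=\sum\mathbf M_z$ over packed $z=x\cdot y$ with $\mathrm{pack}(x)=u'$, $\mathrm{pack}(y)=u''$; $\mathbf M_{u'}\star_q\mathbf M_{u''}=\sum q^{\mathrm{sinv}(z)-\mathrm{sinv}(u')-\mathrm{sinv}(u'')}\mathbf M_z$ over the same $z$. $\zeta$ is the quotient map from $\mathbf{WQSym}$ to its quotient by the span of all $\mathbf M_z-\mathbf M_{z'}$ with $\mathrm{WC}(z)=\mathrm{WC}(z')$. *)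

(* Defs.v *)
From HB Require Import structures.
From mathcomp Require Import all_boot all_order all_algebra.
Set Implicit Arguments. Unset Strict Implicit. Unset Printing Implicit Defensive.
Import Order.TTheory GRing.Theory Num.Theory.
Local Open Scope ring_scope.

(* Words are sequences of positive naturals (letters). *)
Definition word := seq nat.

Definition maxl (w : word) : nat := foldr maxn 0%N w.

Definition packed (w : word) : bool :=
  (0%N \notin w) && all (fun i => i \in w) (iota 1 (maxl w)).

Definition pack (w : word) : word :=
  map (fun x => (index x (sort leq (undup w))).+1) w.

(* Descent positions p (1-indexed, p < N) with w_p not occurring in w_{p+1}...w_N *)
Definition WCdes (w : word) : seq nat :=
  [seq p <- iota 1 (size w).-1 | nth 0%N w p.-1 \notin drop p w].

(* the composition of N = size w whose descent set (partial sums < N) is WCdes w *)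
Definition WC (w : word) : seq nat :=
  if w is [::] then [::]
  else pairmap (fun a b => (b - a)%N) 0%N (rcons (WCdes w) (size w)).

Definition sinv (w : word) : nat :=
  \sum_(0 <= j < size w)
     if nth 0%N w j \notin drop j.+1 w then
       count (fun i => nth 0%N w j < nth 0%N w i)%N (iota 0 j)
     else 0%N.

Definition nondecreasing (w : word) : bool := sorted leq w.

(* The scalar field K(q), with q transcendental. *)
Definition Kq (K : fieldType) := {fraction {poly K}}.
Definition qv (K : fieldType) : Kq K := FracField.tofrac 'X.

(* Elements of WQSym are represented by their coefficient function
   z |-> coefficient of M_z (finitely supported on packed words). *)
Definition WQ (K : fieldType) := word -> Kq K.

Definition Mb (K : fieldType) (z : word) : WQ K := fun w => (w == z)%:R.

Definition starq (K : fieldType) (u1 u2 : word) : WQ K := fun z =>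
  if [&& packed z, size z == (size u1 + size u2)%N,
         pack (take (size u1) z) == u1 & pack (drop (size u1) z) == u2]
  then qv K ^ ((sinv z)%:Z - (sinv u1)%:Z - (sinv u2)%:Z)
  else 0.

(* zeta f = zeta g in the quotient of WQSym by
   span { M_z - M_z' : WC z = WC z' } :
   f - g is a finite linear combination of such differences. *)
Definition zeta_eq (K : fieldType) (f g : WQ K) : Prop :=
  exists s : seq (Kq K * word * word),
    (forall t, t \in s -> [&& packed t.1.2, packed t.2 & WC t.1.2 == WC t.2]) /\
    forall w, f w - g w = \sum_(t <- s) t.1.1 * (Mb K t.1.2 w - Mb K t.2 w).

(* Main.v *)
Require Import Defs.
From mathcomp Require Import all_boot all_order all_algebra.
From mathcomp Require Import zify.

Definition LO (w : word) j := nth 0%N w j \notin drop j.+1 w.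

Lemma maxl_mem w a : a \in w -> a <= maxl w.
Proof.
elim: w => //= b w IH; rewrite in_cons => /orP[/eqP->|/IH h].
  by rewrite leq_maxl.
by rewrite (leq_trans h) // leq_maxr.
Qed.

Lemma maxl_sub w w' : {subset w <= w'} -> maxl w <= maxl w'.
Proof.
elim: w => //= b w IH sub; rewrite geq_max maxl_mem ?sub ?mem_head //.
by apply: IH => x xw; apply: sub; rewrite in_cons xw orbT.
Qed.

Lemma packed_eq w w' : w =i w' -> packed w = packed w'.
Proof.
move=> e; have hm : maxl w = maxl w'.
  by apply/eqP; rewrite eqn_leq !maxl_sub // => x; rewrite e.
by rewrite /packed hm e; congr (_ && _); apply: eq_all => x; rewrite e.
Qed.

Lemma packed_mem w a : packed w -> (a \in w) = (0 < a <= maxl w).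
Proof.
case/andP=> n0 /allP al; apply/idP/idP.
  move=> aw; rewrite maxl_mem // andbT lt0n; apply/eqP => a0.
  by move: n0; rewrite -a0 aw.
move=> h; apply: al; rewrite mem_iota; lia.
Qed.

Lemma packed_undup w : packed w -> size (undup w) = maxl w.
Proof.
move=> pw; rewrite -(size_iota 1 (maxl w)); apply: perm_size.
apply: uniq_perm; rewrite ?undup_uniq ?iota_uniq // => a.
rewrite mem_undup packed_mem // mem_iota; lia.
Qed.

Lemma packed_size w : packed w -> maxl w <= size w.
Proof. by move=> pw; rewrite -packed_undup // size_undup. Qed.

Lemma lastsum (F : nat -> nat) w :
  \sum_(0 <= j < size w) (if LO w j then F (nth 0 w j) else 0) =
  \sum_(b <- undup w) F b.
Proof.
elim: w => [|a w IH]; first by rewrite big_geq // big_nil.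
rewrite /= big_nat_recl // /LO /=.
have -> : \sum_(0 <= i < size w) (if nth 0 (a :: w) i.+1 \notin drop i.+2 (a :: w)
     then F (nth 0 (a :: w) i.+1) else 0) = \sum_(b <- undup w) F b by rewrite -IH.

by rewrite drop0; case: (a \in w); rewrite ?big_cons.
Qed.

Lemma size_undup_LO w : size (undup w) = \sum_(0 <= j < size w) (if LO w j then 1 else 0).
Proof. by rewrite (lastsum (fun _ => 1)) sum1_size. Qed.

Lemma LO_big w j : size w <= j.+1 -> LO w j.
Proof. by move=> h; rewrite /LO drop_oversize. Qed.
Definition sw (y : word) := sort leq (undup y).

Lemma mem_sw y x : (x \in sw y) = (x \in y).
Proof. by rewrite /sw mem_sort mem_undup. Qed.

Lemma uniq_sw y : uniq (sw y).
Proof. by rewrite /sw sort_uniq undup_uniq. Qed.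

Lemma sorted_sw y : sorted leq (sw y).
Proof. exact: sort_sorted leq_total _. Qed.

Lemma size_sw y : size (sw y) = size (undup y).
Proof. by rewrite /sw size_sort. Qed.

Lemma packE y : pack y = map (fun x => (index x (sw y)).+1) y.
Proof. by []. Qed.

Lemma idx_inj y a b : a \in y -> b \in y -> index a (sw y) = index b (sw y) -> a = b.
Proof.
move=> ay yb e; rewrite -(nth_index 0 (_ : a \in sw y)) ?mem_sw // e.
by rewrite nth_index // mem_sw.
Qed.

Lemma idx_lt y a b : a \in y -> b \in y -> (index a (sw y) < index b (sw y)) = (a < b).
Proof.
move=> ay yb; have H := sorted_ltn_index leq_trans (sorted_sw y).
have ay' : a \in sw y by rewrite mem_sw.
have yb' : b \in sw y by rewrite mem_sw.
case: (ltngtP (index a (sw y)) (index b (sw y))) => h.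
- have := H _ _ ay' yb' h; rewrite leq_eqVlt => /orP[/eqP e|//].
  by move: h; rewrite e ltnn.
- have := H _ _ yb' ay' h; rewrite leq_eqVlt => /orP[/eqP e|h2].
    by move: h; rewrite e ltnn.
  by apply/esym/negbTE; rewrite -leqNgt ltnW.
- by rewrite (@idx_inj _ _ _ ay yb h) ltnn.
Qed.

Lemma mem_map_in (f : nat -> nat) (y : seq nat) a (ys : seq nat) : {in y &, injective f} ->
  a \in y -> {subset ys <= y} -> (f a \in map f ys) = (a \in ys).
Proof.
move=> inj ay sub; apply/mapP/idP => [[b bys e]|h]; last by exists a.
by rewrite (inj _ _ ay (sub _ bys) e).
Qed.

Lemma LO_pack y j : LO (pack y) j = LO y j.
Proof.
rewrite /LO packE; case: (ltnP j (size y)) => h; last first.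
  by rewrite !drop_oversize ?size_map // ltnW.
rewrite (nth_map 0) // -map_drop (@mem_map_in _ y) ?mem_nth //.
  by move=> a b ay yb [] /(@idx_inj _ _ _ ay yb).
by move=> x /mem_drop.
Qed.

Lemma sinv_pack y : sinv (pack y) = sinv y.
Proof.
rewrite /sinv size_map; apply: eq_big_nat => j /andP[_ jy].
have := LO_pack y j; rewrite /LO => ->.
case: ifP => // _; apply: eq_in_count => i; rewrite mem_iota => /andP[_ ij].
rewrite packE !(nth_map 0) //; last by rewrite (ltn_trans ij).
by rewrite ltnS idx_lt ?mem_nth // (ltn_trans ij).
Qed.

Lemma WCdesE w : WCdes w = [seq p <- iota 1 (size w).-1 | LO w p.-1].
Proof.
by apply: eq_in_filter => p; rewrite mem_iota /LO; case: p.
Qed.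

Lemma WCdes_mem w j : (j.+1 \in WCdes w) = (j.+1 < size w) && LO w j.
Proof.
rewrite WCdesE mem_filter mem_iota /= andbC; congr (_ && _).
by case: (size w) => //= n; rewrite add1n.
Qed.

Lemma WC_eq w w' : size w = size w' -> (forall j, LO w j = LO w' j) -> WC w = WC w'.
Proof.
move=> es el; have ed : WCdes w = WCdes w'.
  by rewrite !WCdesE es; apply: eq_filter => p; rewrite el.
case: w es ed {el} => [|a w]; case: w' => [|b w'] //= es ed.
by rewrite /WC ed /= es.
Qed.

Lemma scanl_pairmap a s : sorted leq (a :: s) ->
  scanl addn a (pairmap (fun a b => b - a) a s) = s.
Proof.
elim: s a => //= b s IH a /andP[ab ps]; rewrite subnKC // IH //.
Qed.

Lemma sorted_WCdes w : 0 < size w -> sorted leq (0 :: rcons (WCdes w) (size w)).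
Proof.
move=> h; apply: (subseq_sorted leq_trans _ (iota_sorted 0 (size w).+1)).
have -> : iota 0 (size w).+1 = [:: 0] ++ (iota 1 (size w).-1 ++ [:: size w]).
  rewrite /=; congr (_ :: _).
  case: (size w) h => //= n _.
  by have := iotaD 1 n 1; rewrite addn1 add1n => <-.

rewrite -cats1 -cat1s !cat_subseq //; exact: filter_subseq.
Qed.

Lemma WC_LO v v' : WC v = WC v' -> size v = size v' /\ forall j, LO v j = LO v' j.
Proof.
case: v => [|a v]; case: v' => [|b v'] //.
- by rewrite /WC /= => /(congr1 size); rewrite size_pairmap size_rcons.
- by rewrite /WC /= => /(congr1 size); rewrite size_pairmap size_rcons.
move=> e; have : rcons (WCdes (a :: v)) (size (a :: v)) = rcons (WCdes (b :: v')) (size (b :: v')).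
  rewrite -(@scanl_pairmap _ _ (sorted_WCdes (a :: v) isT)).
  by rewrite -(@scanl_pairmap _ _ (sorted_WCdes (b :: v') isT)); exact: (congr1 (scanl addn 0) e).
move/rcons_inj => [ed es]; split; first by rewrite /= es.
move=> j.
case: (ltnP j.+1 (size (a :: v))) => h; last by rewrite !LO_big //= -es.
by have := WCdes_mem (a :: v) j; rewrite ed WCdes_mem /= -es h.
Qed.
Definition unpk (y w : word) : word := map (fun c => nth 0 (sw y) c.-1) w.

Lemma sz_undup_eq w w' : size w = size w' -> (forall j, LO w j = LO w' j) ->
  size (undup w) = size (undup w').
Proof.
by move=> es el; rewrite !size_undup_LO es; apply: eq_big_nat => j _; rewrite el.
Qed.

Section Y.
Variables (y v' : word).
Hypothesis pv' : packed v'.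
Hypothesis sz : size (pack y) = size v'.
Hypothesis lo : forall j, LO (pack y) j = LO v' j.

Let s := sw y.
Let y' := unpk y v'.

Lemma maxl_v' : maxl v' = size s.
Proof.
rewrite -packed_undup // /s size_sw -(@sz_undup_eq _ _ sz lo).
by apply: sz_undup_eq; rewrite ?size_map // => j; rewrite LO_pack.
Qed.

Lemma in_v' c : c \in v' -> 0 < c /\ c.-1 < size s.
Proof. by rewrite (@packed_mem _ _ pv') maxl_v'; case: c. Qed.

Lemma mem_y' : y' =i y.
Proof.
move=> b; apply/mapP/idP => [[c cv ->]|yb].
  by rewrite -mem_sw mem_nth //; case: (@in_v' _ cv).
exists (index b s).+1 => //.
  by rewrite (@packed_mem _ _ pv') maxl_v' /= index_mem /s mem_sw.
by rewrite /= nth_index // /s mem_sw.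
Qed.

Lemma sw_y' : sw y' = s.
Proof.
apply: (sorted_eq leq_trans anti_leq (sorted_sw _) (sorted_sw _)).
apply: uniq_perm; rewrite ?uniq_sw // => b; rewrite !mem_sw mem_y' //.
Qed.

Lemma pack_y' : pack y' = v'.
Proof.
rewrite packE sw_y' -map_comp; apply: map_id_in => c cv /=.
case: (@in_v' _ cv) => c0 cs; rewrite index_uniq ?uniq_sw //; lia.
Qed.

Lemma unpk_y' : unpk y' (pack y) = y.
Proof.
rewrite /unpk sw_y' packE -map_comp; apply: map_id_in => b yb /=.
by rewrite nth_index // /s mem_sw.
Qed.

Lemma size_y' : size y' = size y.
Proof. by rewrite size_map -sz size_map. Qed.

Lemma LO_y' k : LO y' k = LO y k.
Proof. by rewrite -LO_pack pack_y' -lo LO_pack. Qed.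
End Y.
Lemma LO_cat x y i : LO (x ++ y) i =
  if i < size x then nth 0 x i \notin drop i.+1 x ++ y else LO y (i - size x).
Proof.
rewrite /LO nth_cat drop_cat; case: (ltnP i (size x)) => h.
  case: ltnP => // h2; have e : i.+1 = size x by apply/eqP; rewrite eqn_leq h2 h.
  by rewrite e subnn drop0 drop_size.
by rewrite ltnNge (leq_trans h) // subSn.
Qed.

Definition Px (x y : word) := \sum_(0 <= j < size x)
  (if nth 0 x j \notin drop j.+1 x ++ y then count (fun i => nth 0 x j < nth 0 x i) (iota 0 j) else 0).
Definition cx (x : word) b := count (fun i => b < nth 0 x i) (iota 0 (size x)).

Lemma sinv_cat x y : sinv (x ++ y) = Px x y + \sum_(b <- undup y) cx x b + sinv y.
Proof.
rewrite /sinv size_cat (@big_cat_nat _ _ _ (size x)) ?leq_addr //= -addnA; congr (_ + _).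
  apply: eq_big_nat => j /andP[_ jx]; have := LO_cat x y j; rewrite /LO jx => ->.
  rewrite nth_cat jx; case: ifP => // _; apply: eq_in_count => i.
  by rewrite mem_iota nth_cat => /andP[_ ij]; rewrite (ltn_trans ij jx).
rewrite -{1}[size x]add0n big_addn addKn -lastsum -big_split /=.
apply: eq_big_nat => k /andP[_ ky].
have := LO_cat x y (k + size x); rewrite /LO ltnNge leq_addl /= addnK => ->.
have enth : forall k, nth 0 (x ++ y) (k + size x) = nth 0 y k.
  by move=> k'; rewrite nth_cat ltnNge leq_addl /= addnK.
rewrite enth; case: ifP => // _.
rewrite addnC iotaD count_cat add0n; congr (_ + _).
  apply: eq_in_count => i; rewrite mem_iota /= => ix.
  by rewrite nth_cat ix.
have -> : iota (size x) k = map (addn (size x)) (iota 0 k) by rewrite -iotaDl addn0.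
rewrite count_map; apply: eq_count => i /=; by rewrite addnC enth.
Qed.

Lemma Px_eq x y y' : y =i y' -> Px x y = Px x y'.
Proof. by move=> e; apply: eq_bigr => j _; rewrite !mem_cat e. Qed.
Definition cond (u v z : word) : bool :=
  [&& packed z, size z == (size u + size v)%N,
      pack (take (size u) z) == u & pack (drop (size u) z) == v].

Definition Tz (n : nat) (v' z : word) : word := take n z ++ unpk (drop n z) v'.

Lemma key u v v' z : packed v' -> size v = size v' -> (forall j, LO v j = LO v' j) ->
  cond u v z ->
  [/\ cond u v' (Tz (size u) v' z), Tz (size u) v (Tz (size u) v' z) = z,
      (sinv (Tz (size u) v' z) + sinv v = sinv z + sinv v')%N &
      WC (Tz (size u) v' z) = WC z].
Proof.
move=> pv' es el /and4P[pz /eqP sz /eqP px /eqP py].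
set n := size u; set x := take n z; set y := drop n z.
have zE : z = x ++ y by rewrite cat_take_drop.
have sx : size x = n by rewrite size_take sz; case: ltnP => // h; apply/eqP; rewrite eqn_leq h leq_addr.
have sz' : size (pack y) = size v' by rewrite py.
have lo : forall j, LO (pack y) j = LO v' j by move=> j; rewrite py.
have my := @mem_y' y v' pv' sz' lo.
have Py := @pack_y' y v' pv' sz' lo.
have Uy := @unpk_y' y v' pv' sz' lo.
have Sy := @size_y' y v' sz'.
have Ly := @LO_y' y v' pv' sz' lo.
have Tzx : Tz n v' z = x ++ unpk y v' by [].
have tk : take n (Tz n v' z) = x by rewrite Tzx -sx take_size_cat.
have dr : drop n (Tz n v' z) = unpk y v' by rewrite Tzx -sx drop_size_cat.
have mz : Tz n v' z =i z by move=> b; rewrite Tzx zE !mem_cat my.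
split.
- rewrite /cond -/n tk dr px Py !eqxx (@packed_eq _ _ mz) pz /=.

  by rewrite andbT Tzx size_cat Sy -size_cat -zE sz es.
- rewrite /Tz tk dr -py Uy; by rewrite -zE.
- rewrite Tzx zE !sinv_cat (@Px_eq x _ _ my) -(sinv_pack (unpk y v')) Py.
  rewrite -py sinv_pack.
  rewrite -/y (@perm_big _ _ _ _ _ (undup y)); first by rewrite addnAC.
  by apply: uniq_perm; rewrite ?undup_uniq // => b; rewrite !mem_undup my.
- apply: WC_eq; first by rewrite Tzx zE !size_cat Sy.
  by move=> j; rewrite Tzx zE !LO_cat !mem_cat my Ly.
Qed.
Fixpoint allw (B k : nat) : seq word :=
  if k is k'.+1 then [seq a :: w | a <- iota 0 B.+1, w <- allw B k'] else [:: [::]].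

Lemma mem_allw B w : all (fun a => a <= B) w -> w \in allw B (size w).
Proof.
elim: w => [|a w IH] // /andP[aB wB].
change (a :: w \in [seq x :: y | x <- iota 0 B.+1, y <- allw B (size w)]).
by apply: (allpairs_f (fun x y => x :: y)); rewrite ?mem_iota ?IH.
Qed.

Lemma cond_allw u v z : cond u v z -> z \in allw (size u + size v) (size u + size v).
Proof.
case/and4P=> pz /eqP sz _ _; rewrite -{2}sz; apply: mem_allw; apply/allP => a az.
by rewrite -sz (leq_trans (@maxl_mem _ _ az)) // packed_size.
Qed.

Import GRing.Theory.
Local Open Scope ring_scope.

Lemma sum_pick (R : pzRingType) (r : seq word) (F : word -> R) (w : word) : uniq r ->
  \sum_(z <- r) F z * ((w == z)%:R : R) = if w \in r then F w else 0.
Proof.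
elim: r => [|a r IH]; first by rewrite big_nil.
rewrite big_cons in_cons /= => /andP[ar ur]; rewrite IH //.
case: eqP => [->|_]; last by rewrite mulr0 add0r.
by rewrite (negbTE ar) mulr1 addr0.
Qed.

Lemma starqE K u v z : starq K u v z =
  if cond u v z then qv K ^ ((sinv z)%:Z - (sinv u)%:Z - (sinv v)%:Z) else 0.
Proof. by []. Qed.

Theorem mainTheorem18 (K : fieldType) (charK0 : [pchar K] =i pred0)
  (u v v' : word) :
  packed u -> nondecreasing u -> packed v -> packed v' -> WC v' = WC v ->
  zeta_eq (starq K u v) (starq K u v').
Proof.
move=> _ _ pv pv' eWC.
have [es el] := @WC_LO _ _ (esym eWC).
have el' : forall j, LO v' j = LO v j by move=> j; rewrite el.
set n := size u.
set Z := undup (filter (cond u v) (allw (size u + size v) (size u + size v))).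
have mZ : forall z, (z \in Z) = cond u v z.
  move=> z; rewrite mem_undup mem_filter; apply/andP/idP => [[]//|c].
  by split => //; apply: cond_allw.
exists [seq (starq K u v z, z, Tz n v' z) | z <- Z]; split.
  move=> t /mapP[z]; rewrite mZ => cz ->{t} /=.
  have [c' _ _ eW] := @key u v v' _ pv' es el cz.
  by rewrite eW eqxx andbT; case/and4P: cz => ->; case/and4P: c' => ->.
move=> w; rewrite big_map /=.
under eq_bigr do rewrite mulrBr.
rewrite sumrB /Mb sum_pick ?undup_uniq // mZ.
congr (_ - _); first by rewrite starqE; case: ifP.
case cw : (cond u v' w).
  have [cz0 e0 se _] := @key u v' v _ pv (esym es) el' cw.
  set z0 := Tz n v w in cz0 e0 se.
  have E : \sum_(z <- Z) starq K u v z * ((w == Tz n v' z)%:R) =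
           \sum_(z <- Z) starq K u v z * ((z0 == z)%:R).
    apply: eq_big_seq => z; rewrite mZ => cz; congr (_ * _%:R).
    have [_ ez' _ _] := @key u v v' _ pv' es el cz.
    case: eqP => [e|ne]; case: eqP => [e'|ne'] //.
      by case: ne'; rewrite /z0 e ez'.
    by case: ne; rewrite -e' e0.
  rewrite E sum_pick ?undup_uniq // mZ cz0 !starqE cz0 cw.
  congr (_ ^ _); move/(congr1 Posz): se; rewrite !PoszD => se; lia.
rewrite starqE cw big1_seq // => z /andP[_]; rewrite mZ => cz.
have [c' _ _ _] := @key u v v' _ pv' es el cz.
by case: eqP => [e|]; [ move: cw; rewrite e c' | rewrite mulr0].
Qed.
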